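(* Let $\mathbf{Q}(t)=(Q_1(t),\ldots,Q_K(t))$, $t\in\{0,1,2,\ldots\}$, be a stochastic vector process with real-valued components, let $L(\mathbf{Q})=\frac{1}{2}\sum_{k=1}^Kw_kQ_k^2$ with constants $w_k>0$, $\delta(t)=L(\mathbf{Q}(t+1))-L(\mathbf{Q}(t))$ and $d_k(t)=Q_k(t+1)-Q_k(t)$. Suppose there is a finite constant $D>0$ such that $\mathbb{E}[d_k(t)^4\mid\mathbf{Q}(t)]\leq D$ for all $k\in\{1,\ldots,K\}$, all $t$ and all possible $\mathbf{Q}(t)$, and that $\sum_{t=1}^\infty\mathbb{E}[Q_k(t)^2]/t^2<\infty$ for all $k$. Then $\sum_{t=1}^\infty\mathbb{E}[\delta(t)^2]/t^2<\infty$.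
   Context: ''For all possible $\mathbf{Q}(t)$'' means for every realization (almost surely). *)

(* Defs.v *)
From HB Require Import structures.
From mathcomp Require Import all_boot all_order all_algebra.
From mathcomp Require Import all_classical all_reals all_analysis.
Set Implicit Arguments. Unset Strict Implicit. Unset Printing Implicit Defensive.
Import Order.TTheory GRing.Theory Num.Theory.
Local Open Scope classical_set_scope.
Local Open Scope ring_scope.

Definition gen_sets (d : measure_display) (T : measurableType d) (R : realType)
  (K : nat) (X : 'I_K -> T -> R) : set (set T) :=
  [set A | exists k B, measurable B /\ A = X k @^-1` B].

Definition sigmaQ (d : measure_display) (T : measurableType d) (R : realType)
  (K : nat) (X : 'I_K -> T -> R) : set (set T) :=
  <<s gen_sets X >>.

(* "E[Z | sigma(X)] <= D almost surely": there is a version Y of the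
   conditional expectation of Z given sigma(X) (Y is sigma(X)-measurable,
   integrable, and int_A Z = int_A Y for all A in sigma(X)) with Y <= D a.s.
   (Versions are a.s. unique, so this does not depend on the version.) *)
Definition condexp_le (d : measure_display) (T : measurableType d)
  (R : realType) (P : probability T R) (K : nat) (X : 'I_K -> T -> R)
  (Z : T -> R) (D : R) : Prop :=
  exists Y : T -> R,
    (forall B : set R, measurable B -> sigmaQ X (Y @^-1` B)) /\
    P.-integrable setT (fun x => (Y x)%:E) /\
    (forall A, sigmaQ X A ->
       (\int[P]_(x in A) (Z x)%:E = \int[P]_(x in A) (Y x)%:E)%E) /\
    {ae P, forall x, Y x <= D}.

(* Main.v *)
Require Import Defs.
From HB Require Import structures.
From mathcomp Require Import all_boot all_order all_algebra.
From mathcomp Require Import all_classical all_reals all_analysis.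
From mathcomp Require Import measurable_realfun ring lra.
Import Order.TTheory GRing.Theory Num.Theory.
Local Open Scope classical_set_scope.
Local Open Scope ring_scope.

Lemma inv_sq_partial (R : realType) (n : nat) :
  \sum_(1 <= t < n.+2) ((t%:R : R) ^+ 2)^-1 <= 2 - (n.+1%:R)^-1.
Proof.
elim: n => [|n IH].
  by rewrite big_nat1 expr1n invr1; lra.
rewrite big_nat_recr //=.
have a0 : (0 : R) < n.+1%:R by rewrite ltr0n.
set a : R := n.+1%:R in a0 IH *.
have -> : (n.+2%:R : R) = a + 1 by rewrite /a -natr1.
suff H : ((a + 1) ^+ 2)^-1 + (a+1)^-1 <= a^-1.
  move: IH H; clearbody a; move: (\sum_(_ <= _ < _) _) => S; move: ((a + 1) ^+ 2)^-1 => b.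
  move: (a+1)^-1 (a^-1) => c e; lra.
have h : ((a + 1) ^+ 2)^-1 + (a+1)^-1 - a^-1 = - (a * (a+1)^+2)^-1.
  field; have n0 : (0:R) <= n%:R by [].
  by apply/andP; split; rewrite gt_eqF //; lra.
have a10 : 0 < a + 1 by lra.
have : 0 < (a * (a+1)^+2)^-1 by rewrite invr_gt0 mulr_gt0 // exprn_gt0.
move: h; move: (a * _)^-1 ((a + 1) ^+ 2)^-1 (a+1)^-1 (a^-1) => u b c e; lra.
Qed.

Lemma inv_sq_series (R : realType) :
  (\sum_(1 <= t <oo) (((t%:R : R) ^+ 2)^-1)%:E <= 2%:E)%E.
Proof.
apply: lime_le.
  by apply: is_cvg_nneseries => n _; rewrite lee_fin invr_ge0 exprn_ge0.
near=> n.
have [m ->] : exists m, n = m.+2.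
  exists n.-2; rewrite -subn2 -[LHS](subnK (_ : 2 <= n)%N) ?addn2 //; near: n; exact: nbhs_infty_ge.
rewrite sumEFin lee_fin (le_trans (inv_sq_partial _ m)) //.
rewrite lerBlDr lerDl invr_ge0 //.
Unshelve. all: by end_near.
Qed.

Lemma cs_sum (R : realFieldType) (K : nat) (a : 'I_K -> R) :
  (\sum_(k < K) a k) ^+ 2 <= K%:R * \sum_(k < K) a k ^+ 2.
Proof.
rewrite expr2 mulr_suml.
under eq_bigr do rewrite mulr_sumr.
apply: (@le_trans _ _ (\sum_(i < K) \sum_(j < K) (2^-1 * (a i ^+ 2 + a j ^+ 2)))).
  apply: ler_sum => i _; apply: ler_sum => j _.
  have := sqr_ge0 (a i - a j); move: (a i) (a j) => x y h; lra.
under eq_bigr do rewrite -mulr_sumr big_split /= sumr_const card_ord.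
rewrite -mulr_sumr big_split /= sumr_const card_ord sumrMnl.
move: (\sum_(i < K) _) => S.
rewrite -[S *+ K]mulr_natl.
by move: (K%:R * S) => u; lra.
Qed.

Lemma pt_ineq (R : realFieldType) (q d : R) :
  (q * d + 2^-1 * d ^+ 2) ^+ 2 <= q ^+ 2 + q ^+ 2 * d ^+ 4 + d ^+ 4.
Proof.
have h1 := sqr_ge0 (q * d - 2^-1 * d ^+ 2).
have h2 := sqr_ge0 (q * (1 - d ^+ 2)).
have h3 : 0 <= d ^+ 4 by rewrite (_ : 4 = 2 * 2)%N // exprM sqr_ge0.
lra.
Qed.

Lemma delta_sq (R : realFieldType) (K : nat) (w q q' : 'I_K -> R) :
  (2^-1 * \sum_(k < K) w k * q' k ^+ 2 - 2^-1 * \sum_(k < K) w k * q k ^+ 2) ^+ 2 <=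
  \sum_(k < K) (K%:R * w k ^+ 2) *
     (q k ^+ 2 + q k ^+ 2 * (q' k - q k) ^+ 4 + (q' k - q k) ^+ 4).
Proof.
have -> : 2^-1 * \sum_(k < K) w k * q' k ^+ 2 - 2^-1 * \sum_(k < K) w k * q k ^+ 2
   = \sum_(k < K) w k * (q k * (q' k - q k) + 2^-1 * (q' k - q k) ^+ 2).
  by rewrite -mulrBr -sumrB mulr_sumr; apply: eq_bigr => k _; field.
apply: le_trans; first exact: cs_sum.
rewrite mulr_sumr; apply: ler_sum => k _.
rewrite exprMn [leLHS]mulrA; apply: ler_wpM2l; first by rewrite mulr_ge0 // sqr_ge0.
exact: pt_ineq.
Qed.

Lemma count_ge (R : realType) (v z : R) : 0 <= v -> 0 <= z ->
  ((v * z)%:E <= \sum_(n <oo) (if n%:R <= v then z else 0)%:E)%E.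
Proof.
move=> v0 z0.
apply: (le_trans _ (nneseries_lim_ge (Num.truncn v).+1 _)); last first.
  by move=> n _ _; case: ifP; rewrite lee_fin.
rewrite (eq_big_nat _ _ (F2 := fun=> z%:E)); last first.
  move=> i /andP[_ hi]; rewrite ifT //.
  by rewrite (le_trans _ (_ : (Num.truncn v)%:R <= v)) ?truncn_le // ler_nat -ltnS.
rewrite sumEFin sumr_const_nat subn0 lee_fin -mulr_natl ler_wpM2r //.
exact/ltW/truncnS_gt.
Qed.

Lemma count_le (R : realType) (v : R) : 0 <= v ->
  (\sum_(n <oo) (if n%:R <= v then 1 else 0)%:E <= (v + 1)%:E)%E.
Proof.
move=> v0; apply: lime_le.
  by apply: is_cvg_nneseries => n _ _; case: ifP; rewrite lee_fin.
apply: nearW => N.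
rewrite sumEFin lee_fin.
suff : \sum_(0 <= i < N) (if i%:R <= v then 1 else 0) <= v + 1 /\
       \sum_(0 <= i < N) (if i%:R <= v then 1 else 0) <= N%:R :> R by case.
elim: N => [|N [IH1 IH2]]; first by rewrite big_geq //; split; lra.
rewrite big_nat_recr //=; case: ifP => hN.
  by rewrite -natr1; split; lra.
by rewrite addr0 -natr1; split; lra.
Qed.

Section S.
Context d (T : measurableType d) (R : realType) (P : probability T R) (K : nat)
  (X : 'I_K -> T -> R).

Lemma condexp_bound (Z : T -> R) (Dc : R) : 0 < Dc ->
  condexp_le P X Z Dc -> forall A, sigmaQ X A -> measurable A ->
  (\int[P]_(x in A) (Z x)%:E <= Dc%:E * P A)%E.
Proof.
move=> D0 [Y [_ [iY [hY aeY]]]] A sA mA.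
rewrite hY // integralE.
have mY : measurable_fun setT (fun x => (Y x)%:E) by case/integrableP: iY.
have mYA : measurable_fun A (fun x => (Y x)%:E) by exact: measurable_funS mY.
apply: (@le_trans _ _ (\int[P]_(x in A) ((fun x => (Y x)%:E) ^\+ x))%E).
  rewrite leeBlDr; last first.
    apply: integrable_neg_fin_num => //; exact: integrableS iY.
  by rewrite leeDl // integral_ge0.
rewrite -integral_cst //.
apply: ae_ge0_le_integral => //.
all: try (by move=> x _; rewrite /= lee_fin ltW).
all: try exact: measurable_funepos.
apply: filterS aeY => x Yx _.
by rewrite funeposE /= ge_max lee_fin Yx lee_fin ltW.
Qed.

Lemma ms_series (h : nat -> T -> \bar R) : (forall k x, (0 <= h k x)%E) ->
  (forall k, measurable_fun setT (h k)) ->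
  measurable_fun setT (fun x => (\sum_(n <oo) h n x)%E).
Proof.
move=> h0 mh.
exact: (@ge0_emeasurable_sum _ _ _ setT h xpredT (fun k x _ _ => h0 k x) (fun k _ => mh k)).
Qed.

Lemma qz_bound k0 (Z : T -> R) (Dc : R) : (forall k, measurable_fun setT (X k)) ->
  0 < Dc -> measurable_fun setT Z -> (forall x, 0 <= Z x) -> condexp_le P X Z Dc ->
  (\int[P]_x ((X k0 x)^+2 * Z x)%:E <= Dc%:E * (\int[P]_x ((X k0 x)^+2)%:E + 1))%E.
Proof.
move=> mX D0 mZ Z0 cZ.
set q := X k0.
pose A n := q @^-1` [set v : R | n%:R <= v ^+ 2].
have mB n : measurable [set v : R | n%:R <= v ^+ 2].
  have H := @exprn_measurable R setT 2 measurableT _ (measurable_itv `[n%:R, +oo[).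
  rewrite setTI in H; move: H; congr measurable; apply/seteqP; split => v /=;
  by rewrite in_itv /= andbT.
have mq : measurable_fun setT q by exact: mX.
have mA n : measurable (A n).
  by rewrite -[A n]setTI; apply: mq.
have sA n : sigmaQ X (A n).
  by apply: sub_gen_smallest; exists k0, [set v : R | n%:R <= v ^+ 2]; split.
have mZ' : measurable_fun setT (fun x => (Z x)%:E) by exact/measurable_EFinP.
pose f n := (fun x => (Z x)%:E) \_ (A n).
have fE n x : f n x = (if n%:R <= q x ^+ 2 then Z x else 0)%:E.
  rewrite /f patchE; have [h|h] := boolP (n%:R <= q x ^+ 2).
    by rewrite mem_set.
  by rewrite memNset //; apply/negP.
have f0 n x : (0 <= f n x)%E by rewrite fE; case: ifP; rewrite lee_fin.
have mf n : measurable_fun setT (f n).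
  by apply/(measurable_restrictT _ (mA n)); exact: measurable_funS mZ'.
pose g n := (fun x => (1:R)%:E) \_ (A n).
have gE n x : g n x = (if n%:R <= q x ^+ 2 then 1 else 0)%:E.
  rewrite /g patchE; have [h|h] := boolP (n%:R <= q x ^+ 2).
    by rewrite mem_set.
  by rewrite memNset //; apply/negP.
have g0 n x : (0 <= g n x)%E by rewrite gE; case: ifP; rewrite lee_fin.
have mg n : measurable_fun setT (g n).
  by apply/(measurable_restrictT _ (mA n)); exact: measurable_cst.
apply: (@le_trans _ _ (\int[P]_x (\sum_(n <oo) f n x))%E).
  apply: ge0_le_integral => //.
  - by move=> x _; rewrite lee_fin mulr_ge0 // sqr_ge0.
  - apply/measurable_EFinP; apply: measurable_funM => //; exact: measurable_funX.
  - exact: ms_series.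
  move=> x _.
  have -> : (\sum_(n <oo) f n x)%E =
      (\sum_(n <oo) (if n%:R <= q x ^+ 2 then Z x else 0)%:E)%E.
    by congr (limn _); apply/funext => N; apply: eq_bigr => n _; exact: fE.
  exact: count_ge (sqr_ge0 _) (Z0 x).
rewrite integral_nneseries //.
apply: (@le_trans _ _ (\sum_(n <oo) (Dc%:E * P (A n)))%E).
  apply: lee_nneseries.
    by move=> n _ _; apply: integral_ge0 => x _.
  by move=> n _; rewrite -integral_mkcond; exact: condexp_bound.
rewrite nneseriesZl //; apply: lee_wpmul2l; first by rewrite lee_fin ltW.
have PA n : P (A n) = (\int[P]_x g n x)%E.
  by rewrite /g -integral_mkcond integral_cst // mul1e.
have -> : (\sum_(n <oo) P (A n))%E = (\sum_(n <oo) \int[P]_x g n x)%E.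
  by congr (limn _); apply/funext => N; apply: eq_bigr => n _; exact: PA.
rewrite -integral_nneseries //.
apply: (@le_trans _ _ (\int[P]_x ((q x ^+ 2)%:E + 1%:E))%E).
  apply: ge0_le_integral => //.
  - by move=> x _; apply: nneseries_ge0 => n _ _.
  - exact: ms_series.
  - apply: emeasurable_funD => //; apply/measurable_EFinP; exact: measurable_funX.
  move=> x _.
  have -> : (\sum_(n <oo) g n x)%E =
      (\sum_(n <oo) (if n%:R <= q x ^+ 2 then 1 else 0)%:E)%E.
    by congr (limn _); apply/funext => N; apply: eq_bigr => n _; exact: gE.
  rewrite -EFinD; exact: count_le (sqr_ge0 _).
rewrite ge0_integralD //.
- rewrite integral_cst // mul1e; apply: leeD => //; rewrite le_eqVlt; apply/orP; left; apply/eqP; exact: probability_setT.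
- by move=> x _; rewrite lee_fin sqr_ge0.
- apply/measurable_EFinP; exact: measurable_funX.
Qed.
End S.

Lemma sigmaQT d (T : measurableType d) (R : realType) (K : nat) (X : 'I_K -> T -> R) :
  sigmaQ X setT.
Proof.
have [h0 hC _] := smallest_sigma_algebra setT (gen_sets X).
by have := hC set0 h0; rewrite setD0.
Qed.

Lemma coef_bound (R : realType) (c Dc : R) (x : \bar R) : 0 <= c -> 0 <= Dc -> (0 <= x)%E ->
  (c%:E * (x + Dc%:E * (x + 1) + Dc%:E) <= (c * (1 + Dc))%:E * x + (c * (2 * Dc))%:E)%E.
Proof.
case: x => [x| |] // c0 D0 x0.
  rewrite (_ : 1%E = (1:R)%:E) // -?EFinD -?EFinM -?EFinD -?EFinM -?EFinD lee_fin.
  by rewrite le_eqVlt; apply/orP; left; apply/eqP; ring.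
have [->|cp] := eqVneq c 0.
  by rewrite !mul0r mul0e adde0.
have cp' : 0 < c by rewrite lt_def cp.
have hp : (0 < (c * (1 + Dc))%:E)%E.
  by change ((0:R)%:E < (c * (1 + Dc))%:E)%E; rewrite lte_fin mulr_gt0 //; lra.
by rewrite [X in (_ <= X + _)%E](gt0_muley hp) [X in (_ <= X)%E]addye ?leey.
Qed.

Theorem lemma2 (d : measure_display) (T : measurableType d) (R : realType)
  (P : probability T R) (K : nat) (Q : nat -> 'I_K -> T -> R)
  (w : 'I_K -> R) (D : R) :
  (forall t k, measurable_fun setT (Q t k)) ->
  (forall k, 0 < w k) ->
  0 < D ->
  (forall k t, condexp_le P (Q t) (fun x => (Q t.+1 k x - Q t k x) ^+ 4) D) ->
  (forall k, (\sum_(1 <= t <oo)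
      ((\int[P]_x ((Q t k x) ^+ 2)%:E) * ((t%:R ^+ 2)^-1)%:E) < +oo)%E) ->
  let L := fun (q : 'I_K -> R) => 2^-1 * \sum_(k < K) w k * (q k) ^+ 2 in
  let delta := fun t x => L (fun k => Q t.+1 k x) - L (fun k => Q t k x) in
  (\sum_(1 <= t <oo)
      ((\int[P]_x ((delta t x) ^+ 2)%:E) * ((t%:R ^+ 2)^-1)%:E) < +oo)%E.
Proof.
move=> mQ w0 D0 hc hsum; cbv zeta beta.
pose c k := K%:R * w k ^+ 2.
have c0 k : 0 <= c k by rewrite /c mulr_ge0 // sqr_ge0.
have mz t k : measurable_fun setT (fun x => (Q t.+1 k x - Q t k x) ^+ 4).
  by apply: measurable_funX; apply: measurable_funB.
have z0 t k x : 0 <= (Q t.+1 k x - Q t k x) ^+ 4.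
  by rewrite (_ : 4 = 2 * 2)%N // exprM sqr_ge0.
have Ebound t : (\int[P]_x ((2^-1 * \sum_(k < K) w k * Q t.+1 k x ^+ 2 -
            2^-1 * \sum_(k < K) w k * Q t k x ^+ 2) ^+ 2)%:E <= \sum_(k < K)
    ((c k * (1 + D))%:E * \int[P]_x ((Q t k x) ^+ 2)%:E + (c k * (2 * D))%:E))%E.
  pose F k x := c k * (Q t k x ^+ 2 + Q t k x ^+ 2 * (Q t.+1 k x - Q t k x) ^+ 4
                       + (Q t.+1 k x - Q t k x) ^+ 4).
  have mq2 k : measurable_fun setT (fun x => Q t k x ^+ 2) by exact: measurable_funX.
  have mF k : measurable_fun setT (fun x => (F k x)%:E).
    apply/measurable_EFinP; apply: measurable_funM => //.
    apply: measurable_funD => //; apply: measurable_funD => //.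
    exact: measurable_funM.
  have F0 k x : (0 <= (F k x)%:E)%E. rewrite lee_fin.
    apply: mulr_ge0 => //; apply: addr_ge0; [apply: addr_ge0; [exact: sqr_ge0 | apply: mulr_ge0; [exact: sqr_ge0 | exact: z0]] | exact: z0].
  apply: (@le_trans _ _ (\int[P]_x (\sum_(k < K) (F k x)%:E))%E).
    apply: ge0_le_integral => //.
    - by move=> x _; rewrite lee_fin sqr_ge0.
    - apply/measurable_EFinP; apply: measurable_funX.
      apply: measurable_funB; apply: measurable_funM => //;
      apply: measurable_sum => k; apply: measurable_funM => //; exact: measurable_funX.
    - exact: emeasurable_sum.
    - by move=> x _; rewrite sumEFin lee_fin; exact: delta_sq.
  rewrite ge0_integral_sum //.
  apply: lee_sum => k _.
  have hz : (\int[P]_x ((Q t.+1 k x - Q t k x) ^+ 4)%:E <= D%:E)%E.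
    have := @condexp_bound _ _ _ P _ (Q t) _ D D0 (hc k t) setT
      (@sigmaQT _ _ _ _ (Q t)) measurableT.
    by rewrite (probability_setT P) mule1.
  have hqz := @qz_bound _ _ _ P _ (Q t) k _ D (mQ t) D0 (mz t k) (z0 t k) (hc k t).
  have mz' : measurable_fun setT (fun x => ((Q t.+1 k x - Q t k x) ^+ 4)%:E).
    exact/measurable_EFinP.
  have mq2' : measurable_fun setT (fun x => (Q t k x ^+ 2)%:E).
    exact/measurable_EFinP.
  have mqz : measurable_fun setT
      (fun x => (Q t k x ^+ 2 * (Q t.+1 k x - Q t k x) ^+ 4)%:E).
    by apply/measurable_EFinP; apply: measurable_funM.
  have qz0 x : (0 <= (Q t k x ^+ 2 * (Q t.+1 k x - Q t k x) ^+ 4)%:E)%E.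
    by rewrite lee_fin mulr_ge0 ?sqr_ge0.
  under eq_integral do rewrite /F EFinM.
  rewrite ge0_integralZl_EFin //; last first.
    apply/measurable_EFinP; apply: measurable_funD => //; apply: measurable_funD => //.
    exact: measurable_funM.
    move=> x _; rewrite lee_fin.
    apply: addr_ge0; [apply: addr_ge0; [exact: sqr_ge0 | apply: mulr_ge0; [exact: sqr_ge0 | exact: z0]] | exact: z0].
  under eq_integral do rewrite !EFinD.
  rewrite ge0_integralD //; last first.
    by move=> x _; rewrite lee_fin.
    exact: emeasurable_funD.
    by move=> x _; apply: adde_ge0; [rewrite lee_fin sqr_ge0|exact: qz0].
  rewrite ge0_integralD //.
  have i0 : (0 <= \int[P]_x (Q t k x ^+ 2)%:E)%E.
    by apply: integral_ge0 => x _; rewrite lee_fin sqr_ge0.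
  have hc' := @coef_bound R (c k) D _ (c0 k) (ltW D0) i0.
  apply: le_trans; last exact: hc'.
  apply: lee_wpmul2l; first by rewrite lee_fin.
  by apply: leeD => //; apply: leeD.
  by move=> x _; rewrite lee_fin sqr_ge0.
have r0 (t : nat) : (0 <= ((t%:R : R) ^+ 2)^-1%:E)%E.
  by rewrite lee_fin invr_ge0 exprn_ge0.
have a0 k (t : nat) : (0 <= \int[P]_x ((Q t k x) ^+ 2)%:E * ((t%:R : R) ^+ 2)^-1%:E)%E.
  by apply: mule_ge0 => //; apply: integral_ge0 => x _; rewrite lee_fin sqr_ge0.
have b0 k (t : nat) : (0 <= (c k * (2 * D))%:E * ((t%:R : R) ^+ 2)^-1%:E)%E.
  by apply: mule_ge0 => //; rewrite lee_fin mulr_ge0 // mulr_ge0 // ltW.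
have cD0 k : (0 <= (c k * (1 + D))%:E)%E.
  by rewrite lee_fin mulr_ge0 // addr_ge0 // ltW.
apply: (@le_lt_trans _ _ (\sum_(1 <= t <oo) \sum_(k < K)
   ((c k * (1 + D))%:E * (\int[P]_x ((Q t k x) ^+ 2)%:E * ((t%:R : R) ^+ 2)^-1%:E)
    + (c k * (2 * D))%:E * ((t%:R : R) ^+ 2)^-1%:E))%E).
  apply: lee_nneseries.
    by move=> t _ _; apply: mule_ge0 => //; apply: integral_ge0 => x _; rewrite lee_fin sqr_ge0.
  move=> t _.
  apply: le_trans; first exact: (lee_wpmul2r (r0 t) (Ebound t)).
  rewrite ge0_sume_distrl; last first.
    by move=> k _; apply: adde_ge0; [apply: mule_ge0 => //; apply: integral_ge0 => x _; rewrite lee_fin sqr_ge0 | rewrite lee_fin mulr_ge0 // mulr_ge0 // ltW].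
  apply: lee_sum => k _.
  rewrite ge0_muleDl ?muleA //; last by rewrite lee_fin mulr_ge0 // mulr_ge0 // ltW.
  by apply: mule_ge0 => //; apply: integral_ge0 => x _; rewrite lee_fin sqr_ge0.
rewrite nneseries_sum; last by move=> k t _; apply: adde_ge0; [apply: mule_ge0|].
apply: lte_sum_pinfty => k _.
rewrite nneseriesD; [|by move=> t _ _; apply: mule_ge0|by []].
rewrite nneseriesZl; last by move=> t _.
rewrite nneseriesZl; last by move=> t _.
apply: lte_add_pinfty; apply: lte_mul_pinfty => //.
- by change ((0:R)%:E <= (c k * (2 * D))%:E)%E; rewrite lee_fin mulr_ge0 // mulr_ge0 // ltW.
- exact: (le_lt_trans (inv_sq_series R) (ltry _)).
Qed.
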